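(* Let $H$ be a real Hilbert space and consider the problem $$\text{minimize } J(x):=a_J\|x\|^2+2\langle b_J,x\rangle+c_J\quad\text{subject to}\quad f_k(x):=a_k\|x\|^2+2\langle b_k,x\rangle+c_k\le 0,\ k=1,\dots,m,$$ with $a_J,a_k,c_J,c_k\in\mathbb{R}$ and $b_J,b_k\in H$. Let $x^*$ be a global minimizer of this problem, set $a_0:=a_J$, $b_0:=b_J$, $c_0:=c_J-J(x^* )$, so that $f_0(x):=J(x)-J(x^* )=a_0\|x\|^2+2\langle b_0,x\rangle+c_0$, and define $$\Omega_0:=\{(f_0(x),f_1(x),\dots,f_m(x))\mid x\in H\}+\operatorname{int}\mathbb{R}^{m+1}_+ .$$ Suppose that one of the following holds: (1) $H$ is infinite dimensional; (2) $H$ has finite dimension $n\in\mathbb{N}$ and every maximal linearly independent subset of $\{b_0,b_1,\dots,b_m\}$ has cardinality $\bar m<n$. Then $\Omega_0$ is convex.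
   Context: $\|\cdot\|$ is the norm induced by the inner product of $H$. $\operatorname{int}\mathbb{R}^{m+1}_+$ is the set of vectors in $\mathbb{R}^{m+1}$ with strictly positive components and $+$ is the Minkowski sum. *)

(* Defs.v *)
From mathcomp Require Import all_boot all_order all_algebra.
From mathcomp Require Import reals.
Set Implicit Arguments. Unset Strict Implicit. Unset Printing Implicit Defensive.
Import Order.TTheory GRing.Theory Num.Theory.
Local Open Scope ring_scope.

Section Defs.
Variable R : realType.
Variable V : lmodType R.

Definition is_hilbert_inner (ip : V -> V -> R) : Prop :=
  [/\ (forall x y, ip x y = ip y x),
      (forall a x y z, ip (a *: x + y) z = a * ip x z + ip y z),
      (forall x, 0 <= ip x x),
      (forall x, ip x x = 0 -> x = 0) &
      (forall u : nat -> V,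
         (forall e : R, 0 < e -> exists N : nat, forall p q : nat,
            (N <= p)%N -> (N <= q)%N -> Num.sqrt (ip (u p - u q) (u p - u q)) < e) ->
         exists l : V, forall e : R, 0 < e -> exists N : nat, forall p : nat,
            (N <= p)%N -> Num.sqrt (ip (u p - l) (u p - l)) < e)].

Definition lin_indep_on (I : finType) (v : I -> V) (S : {set I}) : Prop :=
  forall c : I -> R, \sum_(i in S) c i *: v i = 0 -> forall i, i \in S -> c i = 0.

Definition lin_indep (I : finType) (v : I -> V) : Prop := lin_indep_on v setT.

Definition spans (I : finType) (v : I -> V) : Prop :=
  forall x : V, exists c : I -> R, x = \sum_i c i *: v i.

Definition has_dim (n : nat) : Prop :=
  exists v : 'I_n -> V, lin_indep v /\ spans v.

Definition infinite_dim : Prop :=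
  forall n : nat, exists v : 'I_n -> V, lin_indep v.

Definition max_lin_indep (I : finType) (v : I -> V) (S : {set I}) : Prop :=
  lin_indep_on v S /\ (forall j, j \notin S -> ~ lin_indep_on v (j |: S)).

Definition quadf (ip : V -> V -> R) (a : R) (b : V) (c : R) (x : V) : R :=
  a * ip x x + 2 * ip b x + c.

(* index 0 of 'I_m.+1 gets the "J"-data, index k.+1 gets the k-th constraint *)
Definition ext0 (T : Type) (m : nat) (t0 : T) (t : 'I_m -> T) (i : 'I_m.+1) : T :=
  match unlift ord0 i with None => t0 | Some k => t k end.

Definition convex_rV (m : nat) (A : 'rV[R]_m -> Prop) : Prop :=
  forall y z : 'rV[R]_m, A y -> A z -> forall t : R, 0 <= t -> t <= 1 ->
    A (t *: y + (1 - t) *: z).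

End Defs.

(* Main.v *)
Require Import Defs.
From mathcomp Require Import all_boot all_order all_algebra.
From mathcomp Require Import reals.
From mathcomp Require Import ring lra zify.
From Stdlib Require Import Classical.
Import Order.TTheory GRing.Theory Num.Theory.
Local Open Scope ring_scope.

Section Aux.
Variables (R : realType) (V : lmodType R) (ip : V -> V -> R).
Hypothesis sym : forall x y, ip x y = ip y x.
Hypothesis lin : forall a x y z, ip (a *: x + y) z = a * ip x z + ip y z.

Lemma ip0l z : ip 0 z = 0.
Proof.
have := lin 1 0 0 z; rewrite scaler0 addr0 mul1r => h.
by move/(congr1 (fun u => u - ip 0 z)): h; rewrite subrr addrK.
Qed.

Lemma ipDl x y z : ip (x + y) z = ip x z + ip y z.
Proof. by have := lin 1 x y z; rewrite scale1r mul1r. Qed.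

Lemma ipZl a x z : ip (a *: x) z = a * ip x z.
Proof. by have := lin a x 0 z; rewrite addr0 ip0l addr0. Qed.

Lemma ipNl x z : ip (- x) z = - ip x z.
Proof. by rewrite -scaleN1r ipZl mulN1r. Qed.

Lemma ipDr x y z : ip z (x + y) = ip z x + ip z y.
Proof. by rewrite sym ipDl !(sym z). Qed.

Lemma ipZr a x z : ip z (a *: x) = a * ip z x.
Proof. by rewrite sym ipZl (sym z). Qed.

Lemma ipNr x z : ip z (- x) = - ip z x.
Proof. by rewrite sym ipNl (sym z). Qed.

Lemma ip_suml (I : finType) (P : pred I) (c : I -> R) (v : I -> V) w :
  ip (\sum_(i | P i) c i *: v i) w = \sum_(i | P i) c i * ip (v i) w.
Proof.
apply: (big_rec2 (fun X Y => ip X w = Y)); first exact: ip0l.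
by move=> i X Y _ <-; rewrite ipDl ipZl.
Qed.

Lemma kernel_vec k l (v : 'I_k -> V) (w : 'I_l -> V) :
  (l < k)%N -> lin_indep v -> exists z, z != 0 /\ forall j, ip (w j) z = 0.
Proof.
move=> lk Hind.
pose M : 'M[R]_(k, l) := \matrix_(i, j) ip (v i) (w j).
have : kermx M != 0.
  rewrite -mxrank_eq0 mxrank_ker subn_eq0 -ltnNge.
  exact: leq_ltn_trans (rank_leq_col M) lk.
case/rowV0Pn => u /sub_kermxP uM unz.
exists (\sum_(i in [set: 'I_k]) u 0 i *: v i); split.
  apply/eqP => z0; apply/negP: unz; rewrite negbK; apply/eqP/rowP => i.
  by rewrite mxE; exact: (Hind (fun i => u 0 i) z0 i (in_setT i)).
move=> j; rewrite sym ip_suml.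
have h := congr1 (fun A : 'rV[R]_l => A 0 j) uM; rewrite /= !mxE in h.
apply: etrans _ h.
rewrite (eq_bigl (fun i => true)); last by move=> i; rewrite in_setT.
by apply: eq_bigr => i _; rewrite mxE.
Qed.

Lemma exists_max (I : finType) (v : I -> V) : exists S, max_lin_indep v S.
Proof.
suff H : forall k (S : {set I}), (#|I| - #|S| <= k)%N -> lin_indep_on v S ->
    exists S, max_lin_indep v S.
  by apply: (H #|I| set0); [rewrite leq_subr | move=> c _ i; rewrite in_set0].
elim=> [|k IH] S hk hS.
  exists S; split=> // j jS _.
  have h : (#|j |: S| <= #|I|)%N by apply: max_card.
  rewrite cardsU1 jS /= in h.
  rewrite leqn0 subn_eq0 in hk.
  by have := leq_trans h hk; rewrite add1n ltnn.
case: (classic (forall j, j \notin S -> ~ lin_indep_on v (j |: S))) => H.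
  by exists S; split.
move/not_all_ex_not: H => [j H]. have [jS H2] := imply_to_and _ _ H. have hj := NNPP _ H2.
apply: (IH (j |: S)) => //; rewrite cardsU1 jS /=.
by rewrite subnDA subnAC leq_subLR add1n.
Qed.

End Aux.
Arguments ip0l {R V ip}. Arguments ipDl {R V ip}. Arguments ipZl {R V ip}.
Arguments ipNl {R V ip}. Arguments ipDr {R V ip}. Arguments ipZr {R V ip}.
Arguments ipNr {R V ip}. Arguments ip_suml {R V ip}. Arguments kernel_vec {R V ip}.
Arguments exists_max {R V I}.

(* Constraints f_1..f_m are indexed by k : 'I_m (k stands for k+1). *)
Theorem theorem4p1 (R : realType) (V : lmodType R) (ip : V -> V -> R)
  (m : nat) (aJ : R) (bJ : V) (cJ : R)
  (a : 'I_m -> R) (b : 'I_m -> V) (c : 'I_m -> R) (xs : V) :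
  is_hilbert_inner ip ->
  (forall k, quadf ip (a k) (b k) (c k) xs <= 0) ->
  (forall x, (forall k, quadf ip (a k) (b k) (c k) x <= 0) ->
     quadf ip aJ bJ cJ xs <= quadf ip aJ bJ cJ x) ->
  let a0 := aJ in let b0 := bJ in let c0 := cJ - quadf ip aJ bJ cJ xs in
  let bfam := ext0 b0 b in
  let F := fun x : V => \row_(i < m.+1)
             quadf ip (ext0 a0 a i) (ext0 b0 b i) (ext0 c0 c i) x in
  let Omega0 := fun y : 'rV[R]_m.+1 =>
      exists x : V, exists d : 'rV[R]_m.+1, (forall i, 0 < d 0 i) /\ y = F x + d in
  (infinite_dim V \/
   exists n : nat, has_dim V n /\
     (forall S : {set 'I_m.+1}, max_lin_indep bfam S -> (#|S| < n)%N)) ->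
  convex_rV Omega0.
Proof.
move=> [sym lin pos def _] _ _ a0 b0 c0 bfam F Omega0 Hdim.
have [z [zne0 zorth]] : exists z, z != 0 /\ forall i, ip (bfam i) z = 0.
  case: Hdim => [Hinf | [n [[v [vind _]] Hmax]]].
    have [v vind] := Hinf m.+2.
    exact: (kernel_vec sym lin _ _ v bfam (ltnSn _) vind).
  have [S HS] := exists_max bfam.
  have Sn := Hmax S HS.
  case: HS => Sind Smax.
  have [z [zne0 zo]] := kernel_vec sym lin _ _ v (fun i : 'I_#|S| => bfam (enum_val i)) Sn vind.
  have zS : forall s, s \in S -> ip (bfam s) z = 0.
    by move=> s Hs; have := zo (enum_rank_in Hs s); rewrite enum_rankK_in.
  exists z; split => // i.
  case: (boolP (i \in S)) => [/zS // | jS].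
  have [cc [hc [i0 [hi ci]]]] : exists cc : 'I_m.+1 -> R,
      \sum_(k in i |: S) cc k *: bfam k = 0 /\ exists i0, i0 \in i |: S /\ cc i0 != 0.
    apply: NNPP => H; apply: (Smax i jS) => cc hc i0 hi.
    apply: NNPP => nci; apply: H; exists cc; split => //; exists i0; split => //.
    by apply/eqP.
  have hsum := congr1 (fun x => ip x z) hc.
  rewrite /= (ip_suml lin) ip0l // (big_setU1 _ jS) /= in hsum.
  rewrite big1 ?addr0 in hsum; last by move=> k kS; rewrite zS ?mulr0.
  move/eqP: hsum; rewrite mulf_eq0 => /orP [/eqP cj0 | /eqP //].
  rewrite (big_setU1 _ jS) /= cj0 scale0r add0r in hc.
  have := Sind cc hc; move: hi; rewrite in_setU1 => /orP [/eqP e | hi0] h.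
    by move: ci; rewrite e cj0 eqxx.
  by move: ci; rewrite h // eqxx.
have ipDl := ipDl lin; have ipZl := ipZl lin; have ipNl := ipNl lin.
have ipDr := ipDr sym lin; have ipZr := ipZr sym lin; have ipNr := ipNr sym lin.
move=> y1 y2 [x1 [d1 [Hd1 ->]]] [x2 [d2 [Hd2 ->]]] t t0 t1.
set x0 := t *: x1 + (1 - t) *: x2.
set del := t * ip x1 x1 + (1 - t) * ip x2 x2 - ip x0 x0.
have edel : del = t * (1 - t) * ip (x1 - x2) (x1 - x2).
  rewrite /del /x0 !(ipDl, ipDr, ipZl, ipZr, ipNl, ipNr) (sym x2 x1); ring.
have del0 : 0 <= del.
  rewrite edel; apply: mulr_ge0; [apply: mulr_ge0; lra | exact: pos].
have x0E : x0 = t *: x1 + (1 - t) *: x2 by [].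
clearbody x0.
set N := ip z z.
have N0 : 0 < N.
  rewrite lt0r pos andbT; apply/eqP => h; move/eqP: zne0; apply; exact: def.
set p := ip x0 z.
set r := Num.sqrt (p ^+ 2 + N * del).
have r2 : r ^+ 2 = p ^+ 2 + N * del.
  by rewrite sqr_sqrtr // addr_ge0 ?sqr_ge0 // mulr_ge0 // ltW.
set s := (r - p) / N.
have key1 : ip (x0 + s *: z) (x0 + s *: z) = t * ip x1 x1 + (1 - t) * ip x2 x2.
  rewrite ipDl !ipDr !ipZl !ipZr -/N -/p (sym z x0) -/p.
  have -> : t * ip x1 x1 + (1 - t) * ip x2 x2 = ip x0 x0 + del by rewrite /del; ring.
  suff : s * (s * N) + s * p + s * p = del by move=> <-; ring.
  have Nne0 : N != 0 by rewrite lt0r_neq0.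
  have sN : s * N = r - p by rewrite /s divfK.
  rewrite sN.
  have -> : s * (r - p) + s * p + s * p = s * (r + p) by ring.
  apply: (mulIf Nne0); rewrite mulrAC sN.
  have -> : (r - p) * (r + p) = r ^+ 2 - p ^+ 2 by ring.
  rewrite r2; ring.
have key2 : forall i, ip (bfam i) (x0 + s *: z) =
    t * ip (bfam i) x1 + (1 - t) * ip (bfam i) x2.
  by move=> i; rewrite ipDr ipZr zorth mulr0 addr0 x0E ipDr !ipZr.
exists (x0 + s *: z), (t *: d1 + (1 - t) *: d2); split.
  move=> i; rewrite !mxE.
  have h1 := Hd1 i; have h2 := Hd2 i.
  move: t0; rewrite le_eqVlt => /orP [/eqP <- | tp].
    by rewrite mul0r add0r subr0 mul1r.
  have p1 : 0 < t * d1 0 i by apply: mulr_gt0.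
  have p2 : 0 <= (1 - t) * d2 0 i by apply: mulr_ge0 => //; lra.
  lra.
apply/rowP => i; rewrite /F !mxE /quadf key1 key2; ring.
Qed.
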